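(* Let $\{e_i\}_{i=1}^\infty$ be the canonical orthonormal basis of the real Hilbert space $\ell_2$, let $a_i\neq0$ be real numbers with $\sum_i a_i^2<\infty$, let $x_k=a_k(e_1+e_{k+1})$, let $L$ be the right shift $L(c_1,c_2,\dots)=(0,c_1,c_2,\dots)$, and let $\mathcal{X}=\{e_i\}_{i=1}^\infty\cup\{2^{-i}L^ix_k\}_{i=0,k=1}^{\infty,\infty}$ (an injective frame for $\ell_2$). Then for every $\epsilon>0$ there is a frame $\mathcal{Y}$ for $\ell_2$ (indexed by the same index set) such that $d(\mathcal{X},\mathcal{Y})<\epsilon$ and $\mathcal{Y}$ is not injective.
   Context: A family $\{y_k\}$ in $\ell_2$ is called injective if whenever a Hilbert–Schmidt self-adjoint operator $T$ on $\ell_2$ satisfies $\langle Ty_k,y_k\rangle=0$ for all $k$, then $T=0$. For frames $\mathcal{X}=\{x_k\}$ and $\mathcal{Y}=\{y_k\}$ indexed by the same set, $d^2(\mathcal{X},\mathcal{Y})=\sum_k\|x_k-y_k\|^2$ (possibly infinite). *)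

(* Defs.v *)
From HB Require Import structures.
From mathcomp Require Import all_boot all_order all_algebra.
From mathcomp Require Import all_classical all_reals all_analysis.
Set Implicit Arguments. Unset Strict Implicit. Unset Printing Implicit Defensive.
Import Order.TTheory GRing.Theory Num.Theory.
Import numFieldNormedType.Exports.
Local Open Scope classical_set_scope.
Local Open Scope ring_scope.

(* Real l2 is modelled as the square-summable sequences nat -> R
   (coordinates w.r.t. the canonical basis; index 0 = e_1). *)
Section L2.
Variable R : realType.

Definition in_l2 (x : nat -> R) : Prop :=
  (\esum_(i in [set: nat]) ((x i) ^+ 2)%:E < +oo)%E.

Definition l2inner (x y : nat -> R) : R := limn (series (fun i => x i * y i)).
Definition l2normsq (x : nat -> R) : R := limn (series (fun i => x i ^+ 2)).

Definition evec (n : nat) : nat -> R := fun m => if m == n then 1 else 0.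

Definition rshift (c : nat -> R) : nat -> R :=
  fun m => if m is m'.+1 then c m' else 0.

Definition is_frame (I : choiceType) (y : I -> nat -> R) : Prop :=
  (forall k, in_l2 (y k)) /\
  exists A B : R, 0 < A /\ 0 < B /\
    forall f, in_l2 f ->
      ((A * l2normsq f)%:E <= \esum_(k in [set: I]) ((l2inner f (y k)) ^+ 2)%:E)%E /\
      (\esum_(k in [set: I]) ((l2inner f (y k)) ^+ 2)%:E <= (B * l2normsq f)%:E)%E.

(* Hilbert-Schmidt self-adjoint operator on l2: a map T defined on l2,
   mapping l2 to l2, linear, bounded, self-adjoint, and with
   sum_i ||T e_i||^2 < oo. Only its values on l2 matter. *)
Definition HS_selfadjoint (T : (nat -> R) -> (nat -> R)) : Prop :=
  (forall x, in_l2 x -> in_l2 (T x)) /\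
  (forall (a : R) x y, in_l2 x -> in_l2 y ->
      T (fun n => a * x n + y n) = (fun n => a * T x n + T y n)) /\
  (exists C : R, forall x, in_l2 x -> l2normsq (T x) <= C * l2normsq x) /\
  (forall x y, in_l2 x -> in_l2 y -> l2inner (T x) y = l2inner x (T y)) /\
  (\esum_(i in [set: nat]) (l2normsq (T (evec i)))%:E < +oo)%E.

Definition injective_family (I : choiceType) (y : I -> nat -> R) : Prop :=
  forall T, HS_selfadjoint T ->
    (forall k, l2inner (T (y k)) (y k) = 0) ->
    forall x, in_l2 x -> T x = (fun _ => 0).

Definition frame_dist_sq (I : choiceType) (x y : I -> nat -> R) : \bar R :=
  \esum_(k in [set: I]) (l2normsq (fun n => x k n - y k n))%:E.

(* x_k = a_k (e_1 + e_{k+1}), k >= 1; 0-indexed: xk a k = a k (e 0 + e (k+1)) *)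
Definition xk (a : nat -> R) (k : nat) : nat -> R :=
  fun n => a k * (evec 0 n + evec k.+1 n).

(* index set: inl n <-> e_{n+1};  inr (i,k) <-> 2^{-i} L^i x_{k+1} *)
Definition Xfam (a : nat -> R) : nat + (nat * nat) -> nat -> R :=
  fun j => match j with
           | inl n => evec n
           | inr (i, k) => fun n => (2 ^- i) * iter i rshift (xk a k) n
           end.
End L2.

(* Main.v *)
Require Import Defs.
From HB Require Import structures.
From mathcomp Require Import all_boot all_order all_algebra.
From mathcomp Require Import all_classical all_reals all_analysis.
From mathcomp Require Import zify ring lra.
Import Order.TTheory GRing.Theory Num.Theory.
Import numFieldNormedType.Exports.
Local Open Scope classical_set_scope.
Local Open Scope ring_scope.

Section S0.
Variable R : realType.

Lemma sum_fin (u : nat -> R) P m : (forall n, (P <= n)%N -> u n = 0) ->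
  (P <= m)%N -> \sum_(0 <= k < m) u k = \sum_(k < P) u k.
Proof.
move=> hu Pm; rewrite (big_cat_nat (leq0n P) Pm) /= [X in _ + X]big1_seq ?addr0 ?big_mkord //.
by move=> i /andP[_]; rewrite mem_index_iota => /andP[Hi _]; exact: hu.
Qed.

Lemma l2inner_fin (x y : nat -> R) P :
  (forall n, (P <= n)%N -> x n * y n = 0) -> l2inner x y = \sum_(n < P) x n * y n.
Proof.
move=> h; rewrite /l2inner; apply: lim_near_cst => //; exists P => // m /= Pm.
by rewrite seriesEnat /= (sum_fin _ _ _ h Pm).
Qed.

Lemma eseries_fin (u : nat -> R) P : (forall n, (P <= n)%N -> u n = 0) ->
  (\sum_(k <oo) (u k)%:E = (\sum_(k < P) u k)%:E)%E.
Proof.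
move=> h; apply: lim_near_cst => //; exists P => // m /= Pm.
by rewrite sumEFin (sum_fin _ _ _ h Pm).
Qed.

Lemma in_l2_fin (x : nat -> R) P : (forall n, (P <= n)%N -> x n = 0) -> in_l2 x.
Proof.
move=> h; rewrite /in_l2 -nneseries_esumT; last by move=> n; rewrite lee_fin sqr_ge0.
by rewrite (@eseries_fin _ P) ?ltry // => n /h ->; rewrite expr0n.
Qed.

Lemma l2_cvg (f : nat -> R) : in_l2 f -> cvgn (series (fun i => f i ^+ 2)).
Proof.
move=> hf; apply: nnseries_is_cvg; first by move=> i; exact: sqr_ge0.
by rewrite nneseries_esumT // => n; rewrite lee_fin sqr_ge0.
Qed.

Lemma l2_esum (f : nat -> R) : in_l2 f ->
  (\esum_(i in [set: nat]) ((f i) ^+ 2)%:E = (l2normsq f)%:E)%E.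
Proof.
move=> hf; rewrite -nneseries_esumT; last by move=> n; rewrite lee_fin sqr_ge0.
rewrite /l2normsq -EFin_lim; last exact: l2_cvg.
by congr (limn _); apply/funext => n; rewrite /= sumEFin seriesEnat.
Qed.

Lemma coord_le (f : nat -> R) n : in_l2 f -> f n ^+ 2 <= l2normsq f.
Proof.
move=> hf.
have nd : nondecreasing_seq (series (fun i => f i ^+ 2)).
  by move=> a b ab; rewrite !seriesEnat; apply: (nondecreasing_series (P := predT)) => // k _ _; exact: sqr_ge0.
have := nondecreasing_cvgn_le nd (l2_cvg f hf) n.+1.
apply: le_trans.
rewrite seriesSr lerDr seriesEnat /=; apply: sumr_ge0 => i _; exact: sqr_ge0.
Qed.

Lemma l2normsq_ge0 (f : nat -> R) : in_l2 f -> 0 <= l2normsq f.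
Proof. move=> hf; apply: le_trans (coord_le f 0 hf); exact: sqr_ge0. Qed.


Lemma sum_delta (F : nat -> R) P i : (i < P)%N ->
  \sum_(n < P) F n * evec R i n = F i.
Proof.
elim: P => [//|P IH] hi; rewrite big_ord_recr /=.
have [->|ne] := eqVneq i P.
  rewrite big1 ?add0r /evec ?eqxx ?mulr1 // => n _.
  by rewrite ifN ?mulr0 // neq_ltn ltn_ord.
rewrite IH; last by move: hi ne; rewrite ltnS leq_eqVlt => /orP[/eqP->|]; rewrite ?eqxx.
by rewrite /evec ifN ?mulr0 ?addr0 // eq_sym.
Qed.

Lemma iter_rshift (g : nat -> R) i n :
  iter i (@Defs.rshift R) g n = if (i <= n)%N then g (n - i)%N else 0.
Proof.
elim: i n => [|i IH] n /=; first by rewrite subn0.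
by case: n => [|n] //=; rewrite IH subSS.
Qed.

Lemma Xval (a : nat -> R) i k n :
  Xfam a (inr (i, k)) n = 2 ^- i * a k * (evec R i n + evec R (i + k).+1 n).
Proof.
rewrite /Xfam iter_rshift /xk /evec.
case: leqP => h.
  have e1 : (n - i == 0)%N = (n == i) by apply/eqP/eqP; lia.
  have e2 : (n - i == k.+1)%N = (n == (i + k).+1) by apply/eqP/eqP; lia.
  by rewrite e1 e2 mulrA.
have e1 : (n == i) = false by apply/eqP; lia.
have e2 : (n == (i + k).+1) = false by apply/eqP; lia.
by rewrite e1 e2 addr0 !mulr0.
Qed.

Lemma l2inner_sym (x y : nat -> R) : l2inner x y = l2inner y x.
Proof. by rewrite /l2inner; congr (limn (series _)); apply/funext => i; rewrite mulrC. Qed.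

Lemma l2normsq_inner (x : nat -> R) : l2normsq x = l2inner x x.
Proof. by rewrite /l2inner /l2normsq; congr (limn (series _)); apply/funext => i; rewrite expr2. Qed.

Lemma inner_evec (f : nat -> R) n : l2inner f (evec R n) = f n.
Proof.
rewrite (@l2inner_fin _ _ n.+1) ?sum_delta // => m hm.
by rewrite /evec ifN ?mulr0 //; apply/eqP; lia.
Qed.

Lemma inner_X (a f : nat -> R) i k :
  l2inner f (Xfam a (inr (i, k))) = 2 ^- i * a k * (f i + f (i + k).+1).
Proof.
rewrite (@l2inner_fin _ _ (i + k).+2); last first.
  by move=> m hm; rewrite Xval /evec !ifN ?addr0 ?mulr0 //; apply/eqP; lia.
have E n : f n * Xfam a (inr (i, k)) n =
    2 ^- i * a k * f n * evec R i n + 2 ^- i * a k * f n * evec R (i + k).+1 n.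
  by rewrite Xval; ring.
under eq_bigr do rewrite E.
rewrite big_split /= (sum_delta (fun n => 2 ^- i * a k * f n)) ?(sum_delta (fun n => 2 ^- i * a k * f n)) //; last lia.
by rewrite -mulrDr.
Qed.


Definition Top (N : nat) (x : nat -> R) : nat -> R :=
  fun n => x N.+1 * evec R N n + x N * evec R N.+1 n.

Lemma Top_fin N x n : (N.+2 <= n)%N -> Top N x n = 0.
Proof. by move=> h; rewrite /Top /evec !ifN ?mulr0 ?addr0 //; apply/eqP; lia. Qed.

Lemma inner_Top N x y : l2inner (Top N x) y = x N.+1 * y N + x N * y N.+1.
Proof.
rewrite (@l2inner_fin _ _ N.+2); last by move=> n h; rewrite Top_fin ?mul0r.
have E n : Top N x n * y n = x N.+1 * y n * evec R N n + x N * y n * evec R N.+1 n.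
  by rewrite /Top; ring.
under eq_bigr do rewrite E.
by rewrite big_split /= (sum_delta (fun n => x N.+1 * y n)) ?(sum_delta (fun n => x N * y n)).
Qed.

Lemma Top_in_l2 N x : in_l2 (Top N x).
Proof. by apply: (@in_l2_fin _ N.+2) => n; apply: Top_fin. Qed.

End S0.

Section S1.
Variable R : realType.
Lemma HS_Top N : HS_selfadjoint (Top R N).
Proof.
have e1 : (N == N.+1) = false by apply: ltn_eqF.
have e2 : (N.+1 == N) = false by apply: gtn_eqF.
split; first by move=> x _; apply: Top_in_l2.
split.
  move=> c x y _ _; apply/funext => n; rewrite /Top.
  move: (evec R N n) (evec R N.+1 n) => u v. ring.
split.
  exists 2 => x hx; rewrite l2normsq_inner inner_Top /Top /evec.
  rewrite !eqxx e1 e2 !mulr0 !mulr1 !addr0 !add0r.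
  have h1 := @coord_le R x N hx; have h2 := @coord_le R x N.+1 hx.
  rewrite -!expr2; lra.
split.
  by move=> x y _ _; rewrite inner_Top l2inner_sym inner_Top; ring.
rewrite -nneseries_esumT; last first.
  by move=> n; rewrite lee_fin; apply: l2normsq_ge0; apply: Top_in_l2.
rewrite (@eseries_fin _ _ N.+2) ?ltry // => n h.
have -> : Top R N (evec R n) = fun _ => 0.
  apply/funext => m; rewrite /Top /evec.
  have -> : (N.+1 == n) = false by apply/eqP; lia.
  have -> : (N == n) = false by apply/eqP; lia.
  by rewrite !mul0r addr0.
by rewrite l2normsq_inner (@l2inner_fin _ _ _ 0) ?big_ord0 // => *; rewrite mulr0.
Qed.
End S1.

Section S2.
Variable R : realType.
Lemma sq_bound (c a w S : R) : 0 <= c -> c <= 1 -> w ^+ 2 <= 4 * S ->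
  (c * a * w) ^+ 2 <= 4 * S * (c * a ^+ 2).
Proof.
move=> c0 c1 hw.
have cc : c ^+ 2 <= c.
  by rewrite expr2; have := ler_wpM2l c0 c1; rewrite mulr1.
rewrite !exprMn [X in _ <= X]mulrC.
apply: ler_pM => //.
- by rewrite mulr_ge0 // sqr_ge0.
- exact: sqr_ge0.
- by apply: ler_wpM2r => //; exact: sqr_ge0.
Qed.

Lemma pow2_ge0 i : 0 <= (2 : R) ^- i.
Proof. by rewrite invr_ge0 exprn_ge0. Qed.

Lemma pow2_le1 i : (2 : R) ^- i <= 1.
Proof. by rewrite invf_le1 ?exprn_ege1 ?exprn_gt0 // ler1n. Qed.

Lemma Xval' (a : nat -> R) i k n :
  2 ^- i * iter i (@Defs.rshift R) (xk a k) n = 2 ^- i * a k * (evec R i n + evec R (i + k).+1 n).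
Proof. exact: (@Xval R a i k n). Qed.

Lemma inner_X' (a f : nat -> R) i k :
  l2inner f (fun n => 2 ^- i * iter i (@Defs.rshift R) (xk a k) n) = 2 ^- i * a k * (f i + f (i + k).+1).
Proof. exact: (@inner_X R a f i k). Qed.

Definition Yfam (a : nat -> R) (N : nat) (j : nat + (nat * nat)) : nat -> R :=
  match j with
  | inl n => evec R n
  | inr (i, k) => if (i == N) && (k == 0%N) then (fun _ => 0) else Xfam a (inr (i, k))
  end.

Lemma Y_in_l2 a N j : in_l2 (Yfam a N j).
Proof.
case: j => [n|[i k]] /=.
  by apply: (@in_l2_fin _ _ n.+1) => m h; rewrite /evec ifN //; apply/eqP; lia.
case: ifP => _; first by apply: (@in_l2_fin _ _ 0).
apply: (@in_l2_fin _ _ (i + k).+2) => m h; change (Xfam a (inr (i, k)) m = 0).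
rewrite Xval /evec !ifN ?addr0 ?mulr0 //; apply/eqP; lia.
Qed.

Lemma Y_prod a N j : Yfam a N j N.+1 * Yfam a N j N = 0.
Proof.
case: j => [n|[i k]] /=.
  rewrite /evec; case: (N.+1 =P n) => [e|_]; last by rewrite mul0r.
  by rewrite ifN ?mulr0 //; apply/eqP; lia.
case: ifP => hik; first by rewrite mulr0.
rewrite !Xval' /evec.
have [eNi|nNi] := eqVneq N i.
  subst i.
  have ek : k != 0%N by move: hik; rewrite eqxx /= => /negbT.
  have f1 : (N.+1 == N) = false by apply/eqP; lia.
  have f2 : (N.+1 == (N + k).+1) = false by apply/eqP; lia.
  have f3 : (N == (N + k).+1) = false by apply/eqP; lia.
  by rewrite f1 f2 f3 !addr0 !mulr0 mul0r.
rewrite add0r.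
have [eNj|nNj] := eqVneq N (i + k).+1.
  have f1 : (N.+1 == i) = false by apply/eqP; lia.
  have f2 : (N.+1 == (i + k).+1) = false by apply/eqP; lia.
  by rewrite f1 f2 addr0 mulr0 mul0r.
by rewrite !mulr0.
Qed.

Lemma Y_bound a N f i k : in_l2 f ->
  (l2inner f (Yfam a N (inr (i, k)))) ^+ 2 <= 4 * l2normsq f * ((2 : R) ^- i * a k ^+ 2).
Proof.
move=> hf /=.
have S0 := @l2normsq_ge0 R f hf.
case: ifP => _.
  rewrite (@l2inner_fin _ _ _ 0) ?big_ord0; last by move=> *; rewrite mulr0.
  rewrite expr0n /=; apply: mulr_ge0; first by rewrite mulr_ge0.
  by rewrite mulr_ge0 ?pow2_ge0 // sqr_ge0.
have := @inner_X R a f i k; rewrite /= => ->.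
apply: sq_bound; rewrite ?pow2_ge0 ?pow2_le1 //.
have h1 := @coord_le R f i hf; have h2 := @coord_le R f (i + k).+1 hf.
nra.
Qed.
End S2.

Section S3.
Variable R : realType.
Local Open Scope ereal_scope.
Lemma setT_prod : [set: nat * nat] = [set: nat] `*`` (fun _ => [set: nat]).
Proof. by apply/seteqP; split. Qed.

Lemma esum2Z (c : R) (h : nat * nat -> R) : (0 <= c)%R -> (forall p, 0 <= h p)%R ->
  \esum_(p in [set: nat * nat]) (c * h p)%:E = c%:E * \esum_(p in [set: nat * nat]) (h p)%:E.
Proof.
move=> c0 h0.
rewrite (eq_esum (b := fun p => (fun i j => (c * h (i, j))%:E) p.1 p.2)); last by case.
rewrite [X in _ = _ * X](eq_esum (b := fun p => (fun i j => (h (i, j))%:E) p.1 p.2)); last by case.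
rewrite setT_prod -(esum_esum (a := fun i j => (c * h (i, j))%:E)); last first.
  by move=> i j _ _; rewrite lee_fin mulr_ge0.
rewrite -(esum_esum (a := fun i j => (h (i, j))%:E)); last first.
  by move=> i j _ _; rewrite lee_fin.
rewrite -!nneseries_esumT; first last.
- by move=> n; apply: esum_ge0 => j _; rewrite lee_fin mulr_ge0.
- by move=> n; apply: esum_ge0 => j _; rewrite lee_fin.
rewrite -nneseriesZl; last by move=> n _; apply: esum_ge0 => j _; rewrite lee_fin.
congr (limn _); apply/funext => m; apply: eq_bigr => i _.
rewrite -!nneseries_esumT; first last.
- by move=> n; rewrite lee_fin mulr_ge0.
- by move=> n; rewrite lee_fin.
rewrite -nneseriesZl; last by move=> n _; rewrite lee_fin.
by congr (limn _); apply/funext => m'; apply: eq_bigr => k _; rewrite EFinM.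
Qed.

Lemma esumZnat (c : R) (u : nat -> R) : (0 <= c)%R -> (forall n, 0 <= u n)%R ->
  \esum_(n in [set: nat]) (c * u n)%:E = c%:E * \esum_(n in [set: nat]) (u n)%:E.
Proof.
move=> c0 u0; rewrite -!nneseries_esumT; first last.
- by move=> n; rewrite lee_fin mulr_ge0.
- by move=> n; rewrite lee_fin.
rewrite -nneseriesZl; last by move=> n _; rewrite lee_fin.
by congr (limn _); apply/funext => m'; apply: eq_bigr => k _; rewrite EFinM.
Qed.

Lemma eseries_cvg (u : nat -> R) : cvgn (series u) ->
  \sum_(k <oo) (u k)%:E = (limn (series u))%:E.
Proof.
move=> cu; rewrite -EFin_lim //.
by congr (limn _); apply/funext => n; rewrite /= sumEFin seriesEnat.
Qed.

Lemma K_fin (a : nat -> R) : in_l2 a ->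
  \esum_(p in [set: nat * nat]) ((2 : R) ^- p.1 * a p.2 ^+ 2)%:E < +oo.
Proof.
move=> ha.
rewrite (eq_esum (b := fun p => (fun i j => ((2 : R) ^- i * a j ^+ 2)%:E) p.1 p.2)); last by case.
rewrite setT_prod -(esum_esum (a := fun i j => ((2 : R) ^- i * a j ^+ 2)%:E)); last first.
  by move=> i j _ _; rewrite lee_fin mulr_ge0 ?sqr_ge0 ?pow2_ge0.
rewrite (eq_esum (b := fun i => (geometric (l2normsq a) (2^-1 : R) i)%:E)); last first.
  move=> i _; rewrite esumZnat ?pow2_ge0 ?l2_esum //; last by move=> n; exact: sqr_ge0.
  by rewrite -EFinM /geometric /= mulrC exprVn.
rewrite -nneseries_esumT; last first.
  by move=> n; rewrite lee_fin /geometric /= mulr_ge0 ?l2normsq_ge0 // exprn_ge0 // invr_ge0.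
rewrite eseries_cvg ?ltry //; apply: is_cvg_geometric_series.
by rewrite ger0_norm ?invr_ge0 // invf_lt1 // ltr1n.
Qed.
End S3.

Section S4.
Variable R : realType.
Local Open Scope ereal_scope.
Lemma Y_frame a N : in_l2 a -> is_frame (Yfam R a N).
Proof.
move=> ha; split; first by move=> j; apply: Y_in_l2.
set K := \esum_(p in [set: nat * nat]) ((2 : R) ^- p.1 * a p.2 ^+ 2)%:E.
have K0 : 0 <= K by apply: esum_ge0 => p _; rewrite lee_fin mulr_ge0 ?pow2_ge0 ?sqr_ge0.
have Kf : K \is a fin_num by rewrite ge0_fin_numE // K_fin.
exists 1%R, (1 + 4 * fine K)%R; split => //; split.
  by rewrite ltr_pwDl // mulr_ge0 // fine_ge0.
move=> f hf.
have S0 := @l2normsq_ge0 R f hf.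
rewrite (esumID (range inl)); last by move=> j _; rewrite lee_fin sqr_ge0.
have E1 : [set: nat + nat * nat] `&` range inl = inl @` setT by rewrite setTI.
have E2 : [set: nat + nat * nat] `&` ~` range inl = inr @` setT.
  apply/seteqP; split => [[n|p]|x] /=.
  - by move=> [_ hx]; exfalso; apply: hx; exists n.
  - by move=> _; exists p.
  - by move=> [p _ <-]; split => // -[n _].
rewrite E1 E2 !esum_image; try by move=> x y _ _ [].
have Hl : \esum_(n in [set: nat]) ((l2inner f (Yfam R a N (inl n))) ^+ 2)%:E = (l2normsq f)%:E.
  by rewrite -l2_esum //; apply: eq_esum => n _ /=; rewrite inner_evec.
rewrite Hl.
have Hr0 : 0 <= \esum_(p in [set: nat * nat]) ((l2inner f (Yfam R a N (inr p))) ^+ 2)%:E.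
  by apply: esum_ge0 => p _; rewrite lee_fin sqr_ge0.
have Hr : \esum_(p in [set: nat * nat]) ((l2inner f (Yfam R a N (inr p))) ^+ 2)%:E
    <= (4 * l2normsq f)%:E * K.
  rewrite /K -esum2Z; first last.
  - by move=> p; rewrite mulr_ge0 ?pow2_ge0 ?sqr_ge0.
  - by rewrite mulr_ge0.
  by apply: le_esum => -[i k] _; rewrite lee_fin; exact: Y_bound.
split; first by rewrite mul1r; apply: leeDl.
rewrite -(fineK Kf) -EFinM in Hr.
apply: le_trans (leeD2l _ Hr) _; rewrite -EFinD lee_fin.
by rewrite [X in (_ <= X)%R](_ : _ = l2normsq f + 4 * l2normsq f * fine K)%R //; ring.
Qed.
End S4.

Lemma choose_N (R : realType) (a0 eps : R) : 0 < eps ->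
  exists N : nat, 2 * ((2 : R) ^- N * a0) ^+ 2 < eps ^+ 2.
Proof.
move=> he.
set c := 2 * a0 ^+ 2 / eps ^+ 2.
exists (Num.trunc c).
have hN := truncnS_gt c.
have h2 : ((Num.trunc c).+1%:R : R) <= 2 ^+ (Num.trunc c).
  by rewrite -natrX ler_nat; exact: ltn_expl.
have e2 : 0 < eps ^+ 2 by rewrite exprn_gt0.
have hc : 2 * a0 ^+ 2 < eps ^+ 2 * 2 ^+ Num.trunc c.
  by rewrite -ltr_pdivrMl // mulrC; apply: lt_le_trans h2.
set t := (2 : R) ^- Num.trunc c.
have t0 : 0 <= t by apply: pow2_ge0.
have t1 : t <= 1 by apply: pow2_le1.
have tt : t * 2 ^+ Num.trunc c = 1 by rewrite /t mulVf // expf_neq0.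
have tp : 0 < t by rewrite /t invr_gt0 exprn_gt0.
have hc' : 2 * a0 ^+ 2 * t < eps ^+ 2.
  move: hc tt tp; move: (2 ^+ Num.trunc c) => p hc tt tp; nra.
have a2 : 0 <= a0 ^+ 2 by apply: sqr_ge0.
nra.
Qed.

Lemma l2normsq0 (R : realType) : l2normsq (fun _ : nat => (0 : R)) = 0.
Proof. by rewrite l2normsq_inner (@l2inner_fin _ _ _ 0) ?big_ord0 // => *; rewrite mulr0. Qed.

Lemma dist_Y (R : realType) (a : nat -> R) N :
  frame_dist_sq (Xfam a) (Yfam R a N) = (2 * ((2 : R) ^- N * a 0%N) ^+ 2)%:E.
Proof.
rewrite /frame_dist_sq.
set v := (2 * ((2 : R) ^- N * a 0%N) ^+ 2).
rewrite (eq_esum (b := fun j => if j \in [set inr (N, 0%N)] then v%:E else 0%E)); last first.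
  move=> [n|[i k]] _ /=.
    rewrite in_set1 /=.
    by under eq_fun do rewrite subrr; rewrite l2normsq0.
  case: ifP => /andP.
    move=> [/eqP -> /eqP ->]; rewrite in_set1 eqxx.
    under eq_fun do rewrite subr0.
    rewrite l2normsq_inner.
    have := @inner_X R a (Xfam a (inr (N, 0%N))) N 0; rewrite /= => ->.
    rewrite !Xval' /evec addn0 eqxx.
    have f1 : (N == N.+1) = false by apply/eqP; lia.
    have f2 : (N.+1 == N) = false by apply/eqP; lia.
    by rewrite f1 f2 eqxx /v; congr EFin; ring.
  move=> hne; under eq_fun do rewrite subrr.
  rewrite l2normsq0 in_set1.
  have -> : (inr (i, k) == inr (N, 0%N) :> nat + nat * nat) = false.
    by apply/negbTE; apply/eqP => -[e1 e2]; apply: hne; rewrite e1 e2 !eqxx.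
  by [].
by rewrite -esum_mkcond esum_set1 // lee_fin mulr_ge0 // sqr_ge0.
Qed.

Theorem mainTheorem15 (R : realType) (a : nat -> R)
  (ha0 : forall i, a i != 0) (ha2 : in_l2 a) :
  forall eps : R, 0 < eps ->
    exists Y : nat + (nat * nat) -> nat -> R,
      is_frame Y /\
      (frame_dist_sq (Xfam a) Y < (eps ^+ 2)%:E)%E /\
      ~ injective_family Y.
Proof.
move=> eps he.
have [N hN] := @choose_N R (a 0%N) eps he.
exists (Yfam R a N); split; first exact: (@Y_frame R a N ha2).
split; first by rewrite dist_Y lte_fin.
move=> Hinj.
have := Hinj (Top R N) (@HS_Top R N).
have H1 : forall k, l2inner (Top R N (Yfam R a N k)) (Yfam R a N k) = 0.
  move=> k; by rewrite inner_Top [X in _ + X]mulrC (@Y_prod R a N k) addr0.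
move=> /(_ H1 (evec R N)).
have hl2 : in_l2 (evec R N).
  by apply: (@in_l2_fin _ _ N.+1) => m h; rewrite /evec ifN //; apply/eqP; lia.
move=> /(_ hl2) /(congr1 (fun g => g N.+1)).
rewrite /Top /evec eqxx.
have f1 : (N.+1 == N) = false by apply/eqP; lia.
rewrite f1 eqxx mulr0 add0r mulr1 => /eqP; by rewrite oner_eq0.
Qed.
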